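(* Let $0<p_{\min}\le p_{\max}$ be vectors in $\mathbb{R}^n$ and $\mathcal{D}_p=\{p:p_{\min}\le p\le p_{\max}\}$. Let $\mathcal{I}:\mathbb{R}^n_{\ge0}\to\mathbb{R}^n$ be differentiable and standard, with $\mathcal{I}(\mathcal{D}_p)\subseteq\mathcal{D}_p$, and let $\kappa:\mathbb{R}^n\to\mathbb{R}^m$ be differentiable with $\nabla\kappa(p)\ge0$ having non-zero rows for all $p\in\mathcal{D}_p$. Consider the problem \[ \min_{p\in\mathcal{D}_p}\ \kappa(p)\quad\text{s.t.}\quad p\ge\mathcal{I}(p), \] and assume it is feasible. Then, with $x=\ln p$, $f_0(x)=\kappa(e^x)$ and $f(x)=\ln\mathcal{I}(e^x)$, the equivalent problem $\min_x f_0(x)$ s.t. $x\ge f(x)$ is Fast-Lipschitz, and consequently the unique fixed point $p^\star=\mathcal{I}(p^\star)$ in $\mathcal{D}_p$ is the unique Pareto optimal solution of the original problem (and the iteration $p^{k+1}=\mathcal{I}(p^k)$ converges to it).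
   Context: Inequalities are element-wise; $\ln$ and $\exp$ act componentwise. $\mathcal{I}$ is standard if for all $p,q\ge0$: (positivity) $\mathcal{I}(p)>0$; (monotonicity) $p\ge q\Rightarrow\mathcal{I}(p)\ge\mathcal{I}(q)$; (scalability) for all $c>1$, $\mathcal{I}(cp)<c\,\mathcal{I}(p)$. Gradient convention: $[\nabla\kappa(p)]_{ij}=\partial\kappa_j(p)/\partial p_i$. For a vector objective, a feasible $p$ is Pareto optimal (minimization) if no feasible $q$ has $\kappa(q)\le\kappa(p)$, $\kappa(q)\neq\kappa(p)$. A problem $\min g_0(x)$ s.t. $x\ge g(x)$ is Fast-Lipschitz if it admits a unique Pareto optimal solution, namely the unique solution of $x=g(x)$. *)

(* Defs.v *)
From Stdlib Require Import Reals.
From mathcomp Require Import all_boot.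
Set Implicit Arguments.
Unset Strict Implicit.
Unset Printing Implicit Defensive.
Open Scope R_scope.

Definition vec (n : nat) := 'I_n -> R.

Definition vconst {n} (c : R) : vec n := fun _ => c.
Definition vadd {n} (p q : vec n) : vec n := fun i => p i + q i.
Definition vscale {n} (c : R) (p : vec n) : vec n := fun i => c * p i.
Definition vexp {n} (x : vec n) : vec n := fun i => exp (x i).
Definition vln {n} (p : vec n) : vec n := fun i => ln (p i).

Definition vle {n} (p q : vec n) : Prop := forall i, p i <= q i.
Definition vlt {n} (p q : vec n) : Prop := forall i, p i < q i.

Definition inbox {n} (pmin pmax p : vec n) : Prop := vle pmin p /\ vle p pmax.

(* Linear map given by a matrix J with the convention
   [grad F(p)]_{ij} = d F_j / d p_i, i.e. (J h)_j = sum_i J i j * h i. *)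
Definition lin_app {n m} (J : 'I_n -> 'I_m -> R) (h : vec n) : vec m :=
  fun j => \big[Rplus/0]_(i < n) (J i j * h i).

(* (Frechet) differentiability of F at p relative to a domain S (increments h
   with p + h in S), with gradient J, w.r.t. the sup norm. *)
Definition has_gradient_within {n m} (S : vec n -> Prop) (F : vec n -> vec m)
    (p : vec n) (J : 'I_n -> 'I_m -> R) : Prop :=
  forall eps, 0 < eps -> exists delta, 0 < delta /\
    forall h : vec n, S (vadd p h) -> (forall i, Rabs (h i) < delta) ->
      forall r, (forall i, Rabs (h i) <= r) ->
        forall j, Rabs (F (vadd p h) j - F p j - lin_app J h j) <= eps * r.

Definition has_gradient {n m} (F : vec n -> vec m) (p : vec n) J :=
  has_gradient_within (fun _ => True) F p J.

Definition differentiable_on {n m} (S : vec n -> Prop) (F : vec n -> vec m) :=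
  forall p, S p -> exists J, has_gradient_within S F p J.

Definition nonneg_orthant {n} (p : vec n) : Prop := vle (vconst 0) p.

Definition standard {n} (I : vec n -> vec n) : Prop :=
  (forall p, nonneg_orthant p -> vlt (vconst 0) (I p)) /\
  (forall p q, nonneg_orthant p -> nonneg_orthant q -> vle q p -> vle (I q) (I p)) /\
  (forall p c, nonneg_orthant p -> 1 < c -> vlt (I (vscale c p)) (vscale c (I p))).

Definition pareto_optimal {n m} (feas : vec n -> Prop) (obj : vec n -> vec m)
    (p : vec n) : Prop :=
  feas p /\ ~ (exists q, feas q /\ vle (obj q) (obj p) /\ obj q <> obj p).

(* The problem  min g0(x)  s.t. x in X, x >= g(x)  is Fast-Lipschitz:
   it admits a unique Pareto optimal solution, namely the unique solution
   (in X) of x = g(x). *)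
Definition fast_lipschitz {n m} (X : vec n -> Prop) (g0 : vec n -> vec m)
    (g : vec n -> vec n) : Prop :=
  let feas := fun x => X x /\ vle (g x) x in
  exists xs, (X xs /\ xs = g xs /\ (forall y, X y -> y = g y -> y = xs)) /\
    pareto_optimal feas g0 xs /\
    (forall y, pareto_optimal feas g0 y -> y = xs).

(* Main.v *)
Require Import Defs.
From Stdlib Require Import Reals.
From mathcomp Require Import all_boot.
From Stdlib Require Import Lra Lia Psatz ClassicalEpsilon FunctionalExtensionality Classical.
Open Scope R_scope.

Lemma argmax_seq (T : eqType) (f : T -> R) (x0 : T) (s : seq T) :
  exists k, forall j, j \in s -> f j <= f k.
Proof.
elim: s => [|x s [k Hk]]; first by exists x0 => j; rewrite in_nil.
case: (Rle_dec (f x) (f k)) => H.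
  exists k => j; rewrite in_cons => /orP [/eqP -> // | /Hk //].
exists x => j; rewrite in_cons => /orP [/eqP -> | /Hk]; lra.
Qed.

Lemma argmax_fin (T : finType) (f : T -> R) (x0 : T) : exists k, forall j, f j <= f k.
Proof.
have [k Hk] := @argmax_seq _ f x0 (enum T).
by exists k => j; apply Hk; rewrite mem_enum.
Qed.

Lemma fin_event (T : finType) (P : T -> nat -> Prop) :
  (forall i k k', (k <= k')%N -> P i k -> P i k') ->
  (forall i, exists k, P i k) -> exists k, forall i, P i k.
Proof.
move=> Hm He.
suff [k Hk] : exists k, forall i, i \in enum T -> P i k.
  by exists k => i; apply Hk; rewrite mem_enum.
elim: (enum T) => [|x s [k Hk]]; first by exists 0%N.
have [kx Hx] := He x.
exists (maxn k kx) => j; rewrite in_cons => /orP [/eqP -> | Hj].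
  by apply: (Hm _ kx) => //; exact: leq_maxr.
by apply: (Hm _ k); [exact: leq_maxl | exact: Hk].
Qed.

Lemma vbound_seq (T : eqType) (d : T -> R) (s : seq T) :
  exists M, 0 <= M /\ forall i, i \in s -> Rabs (d i) <= M.
Proof.
elim: s => [|x s [M [HM Hk]]]; first by exists 0; split; [lra| move=> i; rewrite in_nil].
exists (Rmax M (Rabs (d x))); split; first by have := Rmax_l M (Rabs (d x)); lra.
move=> j; rewrite in_cons => /orP [/eqP -> | /Hk H]; [exact: Rmax_r|].
have := Rmax_l M (Rabs (d x)); lra.
Qed.

Lemma vbound (T : finType) (d : T -> R) : exists M, 0 <= M /\ forall i, Rabs (d i) <= M.
Proof.
have [M [HM Hk]] := @vbound_seq _ d (enum T).
by exists M; split => // i; apply Hk; rewrite mem_enum.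
Qed.

Lemma sum_ge0 (T : Type) (s : seq T) (F : T -> R) :
  (forall i, 0 <= F i) -> 0 <= \big[Rplus/0]_(i <- s) F i.
Proof.
move=> H; elim: s => [|x s IH]; rewrite ?big_nil ?big_cons /=; first lra.
have := H x; lra.
Qed.

Lemma sum_ge_term (T : eqType) (s : seq T) (F : T -> R) k :
  (forall i, 0 <= F i) -> k \in s -> F k <= \big[Rplus/0]_(i <- s) F i.
Proof.
move=> H; elim: s => [|x s IH] //.
rewrite in_cons big_cons /= => /orP [/eqP -> | Hk].
  have := @sum_ge0 _ s F H; lra.
have := IH Hk; have := H x; lra.
Qed.

Lemma lin_scale {n m} (J : 'I_n -> 'I_m -> R) (d : vec n) h j :
  lin_app J (fun i => h * d i) j = h * lin_app J d j.
Proof.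
rewrite /lin_app; elim: (index_enum _) => [|x s IH]; rewrite ?big_nil ?big_cons /=.
  ring.
rewrite IH. set B := bigop _ _ _. ring.
Qed.

Lemma deriv_sum (T : Type) (s : seq T) (f : T -> R -> R) (f' : T -> R) t :
  (forall j, derivable_pt_lim (f j) t (f' j)) ->
  derivable_pt_lim (fun u => \big[Rplus/0]_(j <- s) f j u) t (\big[Rplus/0]_(j <- s) f' j).
Proof.
move=> H; elim: s => [|x s IH].
  have -> : (fun u => \big[Rplus/0]_(j <- [::]) f j u) = fct_cte 0.
    by apply functional_extensionality => u; rewrite big_nil.
  rewrite big_nil; apply derivable_pt_lim_const.
have -> : (fun u => \big[Rplus/0]_(j <- x :: s) f j u) =
          (f x + (fun u => \big[Rplus/0]_(j <- s) f j u))%F.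
  by apply functional_extensionality => u; rewrite big_cons.
rewrite big_cons /=; apply: derivable_pt_lim_plus => //; exact: H.
Qed.
Lemma grad_line {n m} (F : vec n -> vec m) (x d : vec n) t J j :
  has_gradient F (fun i => x i + t * d i) J ->
  derivable_pt_lim (fun s => F (fun i => x i + s * d i) j) t (lin_app J d j).
Proof.
move=> HG eps Heps.
have [M [HM0 HM]] := @vbound _ d.
set k := / (2 * (M + 1)).
have Hk : 0 < k by apply Rinv_0_lt_compat; lra.
have Hk1 : k * (2 * (M + 1)) = 1 by rewrite /k; field; lra.
have He' : 0 < eps * k by apply Rmult_lt_0_compat.
have [del [Hdel HD]] := HG (eps * k) He'.
set u := / (M + 1).
have Hu : 0 < u by apply Rinv_0_lt_compat; lra.
have Hu1 : u * (M + 1) = 1 by rewrite /u; field; lra.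
have Hd2 : 0 < del * u by apply Rmult_lt_0_compat.
exists (mkposreal _ Hd2) => h Hh0 Hh /=.
simpl in Hh.
set hv := fun i => h * d i.
have Heq : vadd (fun i => x i + t * d i) hv = (fun i => x i + (t + h) * d i).
  by apply functional_extensionality => i; rewrite /vadd /hv; ring.
have Hah := Rabs_pos h.
have Hh2 : Rabs h * (M + 1) < del.
  have := Rmult_lt_compat_r (M + 1) _ _ ltac:(lra) Hh.
  have -> : del * u * (M + 1) = del by rewrite Rmult_assoc Hu1; ring.
  done.
have Hsm : forall i, Rabs (hv i) < del.
  move=> i; rewrite /hv Rabs_mult; have := HM i; have := Rabs_pos (d i); nra.
have Hr : forall i, Rabs (hv i) <= Rabs h * M.
  move=> i; rewrite /hv Rabs_mult; apply Rmult_le_compat_l; [exact: Rabs_pos | exact: HM].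
have Hb := HD hv I Hsm _ Hr j.
rewrite Heq lin_scale in Hb.
set A := F _ j - F _ j in Hb *.
set L := lin_app J d j in Hb *.
have Hhp : 0 < Rabs h by apply Rabs_pos_lt.
have -> : A / h - L = (A - h * L) * / h by field.
rewrite Rabs_mult Rabs_inv.
set a := Rabs (A - h * L) in Hb *.
set w := / Rabs h.
have Hw : 0 < w by apply Rinv_0_lt_compat.
have Hw1 : Rabs h * w = 1 by rewrite /w; field; lra.
have : a * w <= eps * k * M.
  have := Rmult_le_compat_r w _ _ (Rlt_le _ _ Hw) Hb.
  have -> : eps * k * (Rabs h * M) * w = eps * k * M * (Rabs h * w) by ring.
  by rewrite Hw1 Rmult_1_r.
have : eps * k * M < eps by nra.
lra.
Qed.
Lemma kappa_mono n m (pmin pmax : vec n) (kappa : vec n -> vec m)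
    (Hkdiff : forall p, exists J, has_gradient kappa p J)
    (Hkgrad : forall p, inbox pmin pmax p -> forall J, has_gradient kappa p J ->
       (forall i j, 0 <= J i j) /\ (forall i, exists j, J i j <> 0))
    p q : inbox pmin pmax p -> inbox pmin pmax q -> vle p q ->
  vle (kappa p) (kappa q) /\ (p <> q -> kappa p <> kappa q).
Proof.
move=> [Hp1 Hp2] [Hq1 Hq2] Hpq.
pose Jf z := proj1_sig (constructive_indefinite_description _ (Hkdiff z)).
have HJ : forall z, has_gradient kappa z (Jf z).
  by move=> z; rewrite /Jf; case: (constructive_indefinite_description _ _).
pose d := fun i => q i - p i.
have Hd : forall i, 0 <= d i by move=> i; rewrite /d; have := Hpq i; lra.
have Hbox : forall s, 0 <= s <= 1 -> inbox pmin pmax (fun i => p i + s * d i).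
  move=> s Hs; split=> i /=; have := Hpq i; have := Hp1 i; have := Hq2 i;
  have := Hd i; rewrite /d; nra.
have E1 : (fun i => p i + 1 * d i) = q.
  by apply functional_extensionality => i; rewrite /d; ring.
have E0 : (fun i => p i + 0 * d i) = p.
  by apply functional_extensionality => i; ring.
have Hnn : forall c, 0 <= c <= 1 -> forall j, 0 <= lin_app (Jf (fun i => p i + c * d i)) d j.
  move=> c Hc j; rewrite /lin_app; apply: sum_ge0 => i.
  have [Hg _] := Hkgrad _ (Hbox c Hc) _ (HJ _).
  apply Rmult_le_pos; [exact: Hg | exact: Hd].
split.
  move=> j.
  have [c [Hc Hcr]] := MVT_cor2 (fun s => kappa (fun i => p i + s * d i) j)
     (fun s => lin_app (Jf (fun i => p i + s * d i)) d j) 0 1 Rlt_0_1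
     (fun c _ => @grad_line _ _ kappa p d c _ j (HJ _)).
  move: Hc; rewrite /= E1 E0 => Hc.
  have := Hnn c ltac:(lra) j; nra.
move=> Hne Hk.
have [i0 Hi0] : exists i, p i < q i.
  apply NNPP => Hn; apply Hne; apply functional_extensionality => i.
  have := Hpq i; case: (Rlt_dec (p i) (q i)) => H; last lra.
  by exfalso; apply Hn; exists i.
have [c [Hc Hcr]] := MVT_cor2
   (fun s => \big[Rplus/0]_(j <- index_enum 'I_m) kappa (fun i => p i + s * d i) j)
   (fun s => \big[Rplus/0]_(j <- index_enum 'I_m) lin_app (Jf (fun i => p i + s * d i)) d j)
   0 1 Rlt_0_1
   (fun c _ => @deriv_sum _ (index_enum 'I_m) _ _ c (fun j => @grad_line _ _ kappa p d c _ j (HJ _))).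
move: Hc; rewrite /= E1 E0 Hk Rminus_diag => Hc.
have [Hg Hrow] := Hkgrad _ (Hbox c ltac:(lra)) _ (HJ _).
have [j0 Hj0] := Hrow i0.
have Hpos : 0 < Jf (fun i => p i + c * d i) i0 j0 * d i0.
  apply Rmult_lt_0_compat; last by rewrite /d; lra.
  by have := Hg i0 j0; lra.
have H1 : Jf (fun i => p i + c * d i) i0 j0 * d i0 <=
          lin_app (Jf (fun i => p i + c * d i)) d j0.
  rewrite /lin_app; apply: (@sum_ge_term _ _ (fun i => Jf _ i j0 * d i)); last exact: mem_index_enum.
  by move=> i; apply Rmult_le_pos; [exact: Hg | exact: Hd].
have H2 : lin_app (Jf (fun i => p i + c * d i)) d j0 <=
   \big[Rplus/0]_(j <- index_enum 'I_m) lin_app (Jf (fun i => p i + c * d i)) d j.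
  apply: (@sum_ge_term _ _ (fun j => lin_app _ d j)); last exact: mem_index_enum.
  by move=> j; apply: Hnn; lra.
move: Hc; rewrite Rminus_0_r Rmult_1_r => Hc.
have H3 : lin_app (Jf (fun i => p i + c * d i)) d j0 <= 0 by rewrite Hc; exact H2.
lra.
Qed.
Lemma div_gt1 x y : 0 < y -> y < x -> 1 < x / y.
Proof.
move=> Hy Hx; have -> : x / y = 1 + (x - y) / y by field; lra.
have : 0 < (x - y) / y by apply Rdiv_lt_0_compat; lra.
lra.
Qed.

Lemma div_le_mul x y c : 0 < y -> x / y <= c -> x <= c * y.
Proof.
move=> Hy H; have -> : x = (x / y) * y by field; lra.
by apply Rmult_le_compat_r; lra.
Qed.

Lemma nn_of_pos {n} {p : vec n} : vlt (vconst 0) p -> nonneg_orthant p.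
Proof. by move=> H i; have := H i; rewrite /vconst; lra. Qed.

Lemma least n (I : vec n -> vec n) : standard I ->
  forall a b, vlt (vconst 0) a -> vlt (vconst 0) b -> a = I a -> vle (I b) b -> vle a b.
Proof.
move=> [Hp [Hm Hs]] a b Ha Hb Hfix Hfeas i0.
apply Rnot_lt_le => Hlt.
have [k Hk] := @argmax_fin _ (fun j => a j / b j) i0.
have Hbk : 0 < b k by apply Hb.
have Hbi : 0 < b i0 by apply Hb.
set c := a k / b k.
have Hc1 : 1 < c by have := Hk i0; have := @div_gt1 (a i0) (b i0) Hbi Hlt; rewrite /c /=; lra.
have Hab : vle a (vscale c b).
  move=> j; rewrite /vscale; apply: div_le_mul; [exact: Hb | exact: Hk].
have Hcb : nonneg_orthant (vscale c b).
  by move=> j; rewrite /vscale /vconst; have := Hb j; rewrite /vconst; nra.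
have H1 := Hm _ _ Hcb (nn_of_pos Ha) Hab.
have H2 := Hs b c (nn_of_pos Hb) Hc1.
have H3 := Hfeas k.
have := H1 k; have := H2 k; rewrite /vscale -Hfix.
have : c * b k = a k by rewrite /c; field; lra.
nra.
Qed.

Lemma cv_const c : Un_cv (fun _ => c) c.
Proof. by move=> e He; exists 0%N => k _; rewrite /Rdist Rminus_diag Rabs_R0. Qed.

Lemma cv_event u l e : Un_cv u l -> 0 < e -> exists N, l - e < u N < l + e.
Proof.
move=> H He; have [N HN] := H e He; exists N.
have := HN N (le_n _); rewrite /Rdist => /Rabs_def2; lra.
Qed.

Lemma cv_le_dec (u : nat -> R) l k : (forall j, u j.+1 <= u j) -> Un_cv u l -> l <= u k.
Proof.
move=> Hd Hc.
have Hs : forall j, u (j + k)%coq_nat <= u k.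
  elim=> [|j IH] /=; first lra.
  by have := Hd (j + k)%coq_nat; lra.
exact (Rle_cv_lim Hs (CV_shift' u k l Hc) (cv_const (u k))).
Qed.

Lemma cv_le_grow (u : nat -> R) l k : (forall j, u j <= u j.+1) -> Un_cv u l -> u k <= l.
Proof.
move=> Hd Hc.
have Hs : forall j, u k <= u (j + k)%coq_nat.
  elim=> [|j IH] /=; first lra.
  by have := Hd (j + k)%coq_nat; lra.
exact (Rle_cv_lim Hs (cv_const (u k)) (CV_shift' u k l Hc)).
Qed.

Lemma squeeze (u v w : nat -> R) l : (forall k, u k <= v k <= w k) ->
  Un_cv u l -> Un_cv w l -> Un_cv v l.
Proof.
move=> H Hu Hw e He.
have [N1 H1] := Hu e He; have [N2 H2] := Hw e He.
exists (Nat.max N1 N2) => k Hk.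
have := H1 k ltac:(lia); have := H2 k ltac:(lia); have := H k.
rewrite /Rdist => ? /Rabs_def2 ? /Rabs_def2 ?; apply Rabs_def1; lra.
Qed.

Lemma lim_dec n (u : nat -> vec n) (L : vec n) :
  (forall k, vle (u k.+1) (u k)) -> (forall k, vle L (u k)) ->
  exists l : vec n, forall i, Un_cv (fun k => u k i) (l i).
Proof.
move=> Hd Hl.
have Hlb : forall i, has_lb (fun k => u k i).
  move=> i; exists (- L i) => x [k ->]; rewrite /opp_seq; have := Hl k i; lra.
exists (fun i => proj1_sig (decreasing_cv _ (fun k => Hd k i) (Hlb i))) => i.
exact: proj2_sig.
Qed.

Lemma lim_grow n (u : nat -> vec n) (U : vec n) :
  (forall k, vle (u k) (u k.+1)) -> (forall k, vle (u k) U) ->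
  exists l : vec n, forall i, Un_cv (fun k => u k i) (l i).
Proof.
move=> Hd Hl.
have Hub : forall i, has_ub (fun k => u k i).
  move=> i; exists (U i) => x [k ->]; exact: Hl.
exists (fun i => proj1_sig (growing_cv _ (fun k => Hd k i) (Hub i))) => i.
exact: proj2_sig.
Qed.
Lemma exp_mono x y : x <= y -> exp x <= exp y.
Proof. by case/Rle_lt_or_eq_dec => [H|->]; [apply Rlt_le, exp_increasing | lra]. Qed.

Lemma ln_mono x y : 0 < x -> x <= y -> ln x <= ln y.
Proof. by move=> Hx; case/Rle_lt_or_eq_dec => [H|->]; [apply Rlt_le, ln_increasing | lra]. Qed.

Lemma dec_le n (a : nat -> vec n) : (forall k, vle (a k.+1) (a k)) ->
  forall k k', (k <= k')%N -> vle (a k') (a k).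
Proof.
move=> Hd k k' Hkk'; rewrite -(subnK Hkk').
elim: (k' - k)%N => [|d IH] i; first by rewrite add0n; lra.
rewrite addSn; have := Hd (d + k)%N i; have := IH i; lra.
Qed.

Lemma grow_le n (a : nat -> vec n) : (forall k, vle (a k) (a k.+1)) ->
  forall k k', (k <= k')%N -> vle (a k) (a k').
Proof.
move=> Hd k k' Hkk'; rewrite -(subnK Hkk').
elim: (k' - k)%N => [|d IH] i; first by rewrite add0n; lra.
rewrite addSn; have := Hd (d + k)%N i; have := IH i; lra.
Qed.
Lemma fixed_exists n (pmin pmax : vec n) (I : vec n -> vec n)
    (Hpmin : vlt (vconst 0) pmin) (Hpminmax : vle pmin pmax)
    (HIstd : standard I)
    (HIbox : forall p, inbox pmin pmax p -> inbox pmin pmax (I p)) :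
  exists l, inbox pmin pmax l /\ l = I l /\
    (forall q, inbox pmin pmax q -> q = I q -> q = l) /\
    (forall p0, inbox pmin pmax p0 -> forall i, Un_cv (fun k => iter k I p0 i) (l i)).
Proof.
have [Hp [Hm Hs]] := HIstd.
have boxpos : forall p, inbox pmin pmax p -> vlt (vconst 0) p.
  move=> p [H1 _] i; have := Hpmin i; have := H1 i; rewrite /vconst; lra.
have boxnn : forall p, inbox pmin pmax p -> nonneg_orthant p.
  by move=> p Hb; apply: nn_of_pos; apply: boxpos.
have Hminb : inbox pmin pmax pmin by split => // i; lra.
have Hmaxb : inbox pmin pmax pmax by split => // i; lra.
have Hitbox : forall k p0, inbox pmin pmax p0 -> inbox pmin pmax (iter k I p0).
  by elim=> [|k IH] p0 H //=; apply: HIbox; apply: IH.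
have Hitmono : forall k p q, inbox pmin pmax p -> inbox pmin pmax q -> vle p q ->
    vle (iter k I p) (iter k I q).
  elim=> [|k IH] p q Hpb Hqb Hpq //=.
  by apply: Hm; [apply: boxnn; apply: Hitbox | apply: boxnn; apply: Hitbox | apply: IH].
have Huniq : forall a b, inbox pmin pmax a -> inbox pmin pmax b -> a = I a -> b = I b -> a = b.
  move=> a b Ha Hb Hfa Hfb; apply functional_extensionality => i.
  have H1 := @least _ I HIstd _ _ (boxpos _ Ha) (boxpos _ Hb) Hfa (ltac:(rewrite -Hfb => j; lra)) i.
  have H2 := @least _ I HIstd _ _ (boxpos _ Hb) (boxpos _ Ha) Hfb (ltac:(rewrite -Hfa => j; lra)) i.
  lra.
pose a k := iter k I pmax.
have Hdec : forall k, vle (a k.+1) (a k).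
  move=> k; rewrite /a iterSr; apply: Hitmono => //; first exact: HIbox.
  exact: (HIbox _ Hmaxb).2.
have [l Hl] := @lim_dec _ a pmin Hdec (fun k => (Hitbox k pmax Hmaxb).1).
have Hl_le : forall k i, l i <= a k i.
  by move=> k i; apply: (cv_le_dec (fun k => a k i) (l i) k) => // j; apply: Hdec.
have Hlb : inbox pmin pmax l.
  split=> i; last by exact: (Hl_le 0%N i).
  exact (Rle_cv_lim (fun k => (Hitbox k pmax Hmaxb).1 i) (cv_const _) (Hl i)).
have Hlnn := boxnn _ Hlb.
have Hlpos := boxpos _ Hlb.
have Hfix1 : vle (I l) l.
  move=> i.
  have H : forall k, I l i <= a (k + 1)%coq_nat i.
    move=> k; rewrite Nat.add_1_r /a iterS.
    apply: Hm => //; [by apply: boxnn; apply: Hitbox | move=> j; apply: Hl_le].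
  exact (Rle_cv_lim H (cv_const _) (CV_shift' _ 1 _ (Hl i))).
have Hfix2 : vle l (I l).
  move=> i; apply Rnot_lt_le => Hlt.
  have Hpi : 0 < I l i by have := Hp l Hlnn i; rewrite /vconst.
  set c := (l i / I l i + 1) / 2.
  have Hc1 : 1 < c by have := @div_gt1 (l i) (I l i) Hpi Hlt; rewrite /c; lra.
  have Hc2 : c * I l i < l i.
    have -> : c * I l i = (l i + I l i) / 2 by rewrite /c; field; lra.
    lra.
  have [K HK] := @fin_event _ (fun j k => a k j <= c * l j)
     (fun j k k' Hkk' H => Rle_trans _ _ _ (@dec_le _ a Hdec _ _ Hkk' j) H)
     (fun j => ltac:(
        have Hlj := Hlpos j; rewrite /vconst in Hlj;
        have [N HN] := @cv_event _ _ _ (Hl j) (ltac:(nra) : 0 < (c - 1) * l j);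
        exists N; nra)).
  have Hcl : nonneg_orthant (vscale c l).
    by move=> j; rewrite /vscale /vconst; have := Hlnn j; rewrite /vconst; nra.
  have H1 : vle (I (a K)) (I (vscale c l)).
    apply: Hm => //; first by apply: boxnn; apply: Hitbox.
  have H2 := Hs l c Hlnn Hc1 i.
  have H3 := Hl_le K.+1 i.
  rewrite /a iterS -/(a K) in H3.
  have := H1 i; move: H2; rewrite /vscale; lra.
have Hfix : l = I l.
  by apply functional_extensionality => i; have := Hfix1 i; have := Hfix2 i; lra.
exists l; split=> //; split=> //; split.
  by move=> q Hq Hfq; apply: Huniq.
pose b k := iter k I pmin.
have Hgr : forall k, vle (b k) (b k.+1).
  move=> k; rewrite /b iterSr; apply: Hitmono => //; first exact: HIbox.
  exact: (HIbox _ Hminb).1.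
have [q Hq] := @lim_grow _ b pmax Hgr (fun k => (Hitbox k pmin Hminb).2).
have Hq_ge : forall k i, b k i <= q i.
  by move=> k i; apply: (cv_le_grow (fun k => b k i) (q i) k) => // j; apply: Hgr.
have Hqb : inbox pmin pmax q.
  split=> i; first by exact: (Hq_ge 0%N i).
  exact (Rle_cv_lim (fun k => (Hitbox k pmin Hminb).2 i) (Hq i) (cv_const _)).
have Hqnn := boxnn _ Hqb.
have Hqpos := boxpos _ Hqb.
have Hfq1 : vle q (I q).
  move=> i.
  have H : forall k, b (k + 1)%coq_nat i <= I q i.
    move=> k; rewrite Nat.add_1_r /b iterS.
    apply: Hm => //; [by apply: boxnn; apply: Hitbox | move=> j; apply: Hq_ge].
  exact (Rle_cv_lim H (CV_shift' _ 1 _ (Hq i)) (cv_const _)).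
have Hfq2 : vle (I q) q.
  move=> i; apply Rnot_lt_le => Hlt.
  have Hqi : 0 < q i by have := Hqpos i; rewrite /vconst.
  set c := (I q i / q i + 1) / 2.
  have Hc1 : 1 < c by have := @div_gt1 (I q i) (q i) Hqi Hlt; rewrite /c; lra.
  have Hc2 : c * q i < I q i.
    have -> : c * q i = (I q i + q i) / 2 by rewrite /c; field; lra.
    lra.
  have Hci : / c * c = 1 by field; lra.
  have Hci0 : 0 < / c by apply Rinv_0_lt_compat; lra.
  have [K HK] := @fin_event _ (fun j k => / c * q j <= b k j)
     (fun j k k' Hkk' H => Rle_trans _ _ _ H (@grow_le _ b Hgr _ _ Hkk' j))
     (fun j => ltac:(
        have Hqj := Hqpos j; rewrite /vconst in Hqj;
        have [N HN] := @cv_event _ _ _ (Hq j) (ltac:(nra) : 0 < (1 - / c) * q j);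
        exists N; nra)).
  have Hcq : nonneg_orthant (vscale (/ c) q).
    by move=> j; rewrite /vscale /vconst; have := Hqnn j; rewrite /vconst; nra.
  have H1 : vle (I (vscale (/ c) q)) (I (b K)).
    apply: Hm => //; first by apply: boxnn; apply: Hitbox.
  have H2 := Hs (vscale (/ c) q) c Hcq Hc1 i.
  have E : vscale c (vscale (/ c) q) = q.
    by apply functional_extensionality => j; rewrite /vscale; field; lra.
  rewrite E in H2.
  have H3 := Hq_ge K.+1 i.
  rewrite /b iterS -/(b K) in H3.
  have H4 := H1 i.
  have H2' : I q i < c * I (vscale (/ c) q) i := H2.
  have : c * I (vscale (/ c) q) i <= c * q i.
    apply Rmult_le_compat_l; lra.
  lra.
have Hfq : q = I q.
  by apply functional_extensionality => i; have := Hfq1 i; have := Hfq2 i; lra.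
have Hql : q = l by apply: Huniq.
move=> p0 Hp0 i.
apply: (squeeze (fun k => b k i) _ (fun k => a k i)).
- move=> k; split.
    by apply: Hitmono => //; case: Hp0.
  by apply: Hitmono => //; case: Hp0.
- by rewrite -Hql; apply: Hq.
- exact: Hl.
Qed.

Theorem mainTheorem3 (n m : nat) (pmin pmax : vec n)
    (I : vec n -> vec n) (kappa : vec n -> vec m)
    (Hpmin : vlt (vconst 0) pmin) (Hpminmax : vle pmin pmax)
    (HIdiff : differentiable_on nonneg_orthant I)
    (HIstd : standard I)
    (HIbox : forall p, inbox pmin pmax p -> inbox pmin pmax (I p))
    (Hkdiff : forall p, exists J, has_gradient kappa p J)
    (Hkgrad : forall p, inbox pmin pmax p -> forall J, has_gradient kappa p J ->
       (forall i j, 0 <= J i j) /\ (forall i, exists j, J i j <> 0))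
    (Hfeas : exists p, inbox pmin pmax p /\ vle (I p) p) :
  fast_lipschitz (fun x => inbox pmin pmax (vexp x))
                 (fun x => kappa (vexp x))
                 (fun x => vln (I (vexp x)))
  /\ exists ps : vec n,
       inbox pmin pmax ps /\ ps = I ps /\
       (forall q, inbox pmin pmax q -> q = I q -> q = ps) /\
       pareto_optimal (fun p => inbox pmin pmax p /\ vle (I p) p) kappa ps /\
       (forall q, pareto_optimal (fun p => inbox pmin pmax p /\ vle (I p) p) kappa q ->
          q = ps) /\
       (forall p0, inbox pmin pmax p0 ->
          forall i, Un_cv (fun k => iter k I p0 i) (ps i)).
Proof.
have [l [Hlb [Hfix [Huniq Hcv]]]] := @fixed_exists _ _ _ _ Hpmin Hpminmax HIstd HIbox.
have [Hp [Hm Hs]] := HIstd.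
have boxpos : forall p, inbox pmin pmax p -> vlt (vconst 0) p.
  move=> p [H1 _] i; have := Hpmin i; have := H1 i; rewrite /vconst; lra.
have Hleast : forall p, inbox pmin pmax p -> vle (I p) p -> vle l p.
  by move=> p Hpb Hpf; apply: (@least _ I HIstd _ _ (boxpos _ Hlb) (boxpos _ Hpb) Hfix Hpf).
have Hlfeas : inbox pmin pmax l /\ vle (I l) l by split => //; rewrite -Hfix => i; lra.
have Hkm := @kappa_mono _ _ _ _ _ Hkdiff Hkgrad.
have Hpar : pareto_optimal (fun p => inbox pmin pmax p /\ vle (I p) p) kappa l.
  split => // -[q [[Hqb Hqf] [Hle Hne]]]; apply: Hne.
  apply functional_extensionality => j.
  have := (Hkm _ _ Hlb Hqb (Hleast q Hqb Hqf)).1 j; have := Hle j; lra.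
have Hparu : forall y, pareto_optimal (fun p => inbox pmin pmax p /\ vle (I p) p) kappa y -> y = l.
  move=> y [[Hyb Hyf] Hn]; apply NNPP => Hne; apply: Hn.
  have [H1 H2] := Hkm _ _ Hlb Hyb (Hleast y Hyb Hyf).
  exists l; split => //; split => //.
  by apply: H2 => E; apply: Hne.
split; last by exists l.
have Hexpln : forall p : vec n, vlt (vconst 0) p -> vexp (vln p) = p.
  by move=> p Hp0; apply functional_extensionality => i; rewrite /vexp /vln exp_ln //; apply: Hp0.
have Hlnexp : forall x : vec n, vln (vexp x) = x.
  by move=> x; apply functional_extensionality => i; rewrite /vexp /vln ln_exp.
have Hequiv : forall x, inbox pmin pmax (vexp x) ->
    (vle (vln (I (vexp x))) x <-> vle (I (vexp x)) (vexp x)).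
  move=> x Hx; have HIp := Hp _ (nn_of_pos (boxpos _ Hx)).
  split => H i.
    rewrite /vexp -(exp_ln (I (vexp x) i)); last by apply: HIp.
    by apply: exp_mono; apply: H.
  rewrite -(ln_exp (x i)); apply: ln_mono; first by apply: HIp.
  exact: H.
exists (vln l); split; [split; [|split] | split].
- by rewrite Hexpln //; apply: boxpos.
- rewrite Hexpln; last exact: boxpos Hlb.
  by rewrite -Hfix.
- move=> y Hy Hfy.
  have HIp := Hp _ (nn_of_pos (boxpos _ Hy)).
  have Hfe : vexp y = I (vexp y) by rewrite {1}Hfy Hexpln.
  by rewrite -(Hlnexp y) (Huniq _ Hy Hfe).
  rewrite /pareto_optimal /=.
  have Hl0 := boxpos _ Hlb.
  rewrite Hexpln //.
  split; first by split => //; rewrite -Hfix => k; lra.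
  move=> [y [[Hyb Hyf] [Hle Hne]]].
  apply: Hpar.2; exists (vexp y); split => //; split => //.
  by apply/Hequiv.
- move=> y [[Hyb Hyf] Hn].
  suff E : vexp y = l by rewrite -(Hlnexp y) E.
  apply: Hparu; split; first by split => //; apply/Hequiv.
  move=> [q [[Hqb Hqf] [Hle Hne]]]; apply: Hn; exists (vln q).
  rewrite Hexpln; last exact: boxpos.
  split => //; split => // i; rewrite /vln; apply: ln_mono; [exact: (Hp _ (nn_of_pos (boxpos _ Hqb))) | exact: Hqf].
Qed.
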